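(* There exist a Bayes-adaptive MDP $M^+$ (built from a task distribution $p(\kappa)$ over finite-horizon MDPs) and task-dependent behavior policies $[\mu]=p(\mu\mid\kappa)$ such that, for every batch-constrained meta-policy $\pi^+$, the transition-reward distribution shift between $\mathbb{P}_{M^+,[\mu]}$ and $\mathbb{P}_{M^+,\pi^+}$ occurs; that is, there is a pair $(s_t^+,a_t)$ reached with positive probability when executing $\pi^+$ in $M^+$ such that $$\mathbb{P}_{M^+,[\mu]}(r_t,s_{t+1}\mid s_t^+,a_t)\neq \mathbb{P}_{M^+,\pi^+}(r_t,s_{t+1}\mid s_t^+,a_t)$$ for some $(r_t,s_{t+1})$.
   Context: Tasks: a distribution $p(\kappa)$ over tasks $\kappa$, each a finite-horizon MDP $(\mathcal S,\mathcal A,\mathcal R,H,P^\kappa,R^\kappa)$ with common finite state, action and reward spaces, horizon $H$, fixed initial state $s_0$, transition kernel $P^\kappa(s'\mid s,a)$ and reward distribution $R^\kappa(r\mid s,a)$ with rewards in $[0,1]$. An agent interacts with one sampled task for $N$ episodes, total horizon $H^+=NH$. A context $c_{:t}=\langle s_0,(a_0,r_0,s_1),\dots,(a_{t-1},r_{t-1},s_t)\rangle$ is the interaction history; the belief $b_t=p(\kappa\mid c_{:t})$ is the Bayesian posterior over tasks ($b_0=p(\kappa)$, and $b_{t+1}\propto \mathbb E_{\kappa\sim b_t}[R^\kappa(r_t\mid s_t,a_t)P^\kappa(s_{t+1}\mid s_t,a_t)]\,b_t$ in the usual Bayes sense). The Bayes-adaptive MDP (BAMDP) $M^+$ has hyper-states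 $s_t^+=(s_t,b_t)$, reward distribution $R^+(r\mid s^+,a)=\mathbb E_{\kappa\sim b}[R^\kappa(r\mid s,a)]$, state transition $P^+(s'\mid s^+,a)=\mathbb E_{\kappa\sim b}[P^\kappa(s'\mid s,a)]$, with the belief updated by Bayes' rule. A meta-policy $\pi^+$ maps hyper-states to distributions over actions. Task-dependent behavior policies $[\mu]=p(\mu\mid\kappa)$: a conditional distribution over policies $\mu:\mathcal S\to\Delta(\mathcal A)$ given the task. The offline dataset $\mathcal D^+$ consists of i.i.d. trajectories obtained by sampling $\kappa\sim p$, $\mu\sim p(\mu\mid\kappa)$ and executing $\mu$ in $\kappa$. The offline reward-transition distribution is $\mathbb P_{M^+,[\mu]}(r_t,s_{t+1}\mid s_t^+,a_t)\propto \mathbb E_{\kappa\sim p,\ \mu\sim p(\mu\mid\kappa)}\big[R^\kappa(r_t\mid s_t,a_t)P^\kappa(s_{t+1}\mid s_t,a_t)\, p_{M^+}(s_t^+\mid\kappa,\mu)\big]$, where $p_{M^+}(s_t^+\mid\kappa,\mu)$ is the probability that executing $\mu$ in $\kappa$ produces a context $c_{:t}$ ending in state $s_t$ with $p(\kappa\mid c_{:t})=b_t$. The online reward-transition distribution of a meta-policy is $\mathbb P_{M^+,\pi^+}(r_t,s_{t+1}\mid s_t^+,a_t)=R^+(r_t\mid s_t^+,a_t)P^+(s_{t+1}\mid s_t^+,a_t)$. A meta-policy $\pi^+$ is batch-constrained if $\pi^+(a\mid s^+)=0$ whenever the pair $(s^+,a)$ does not occur in the offline data (i.e. has zero probability under the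 offline collection by $[\mu]$). *)

(* Defs.v *)
From HB Require Import structures.
From mathcomp Require Import all_boot all_order all_algebra.
From mathcomp Require Import reals.

Unset Implicit Arguments.
Unset Strict Implicit.
Unset Printing Implicit Defensive.

Import Order.TTheory GRing.Theory Num.Theory.
Local Open Scope ring_scope.

Section BAMDP.
Variable R : realType.

Definition is_dist (T : finType) (d : T -> R) : Prop :=
  (forall x, 0 <= d x) /\ \sum_(x : T) d x = 1.

(* A task distribution over finite-horizon MDPs with common finite state,
   action and reward spaces; tasks are indexed by the finite type bK.
   [rval] gives the numerical value (in [0,1]) of each reward label. *)
Record bamdp := BAMDP {
  bS : finType; bA : finType; bRw : finType; bK : finType;
  rval : bRw -> R;
  hor : nat;
  neps : nat;
  s0 : bS;
  prior : bK -> R;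
  Ptr : bK -> bS -> bA -> bS -> R;
  Rdist : bK -> bS -> bA -> bRw -> R
}.

Arguments is_dist {T}.

Definition wf_bamdp (M : bamdp) : Prop :=
  (0 < hor M)%N /\ (0 < neps M)%N /\ injective (rval M) /\
  (forall r, 0 <= rval M r <= 1) /\ is_dist (prior M) /\
  (forall k s a, is_dist (Ptr M k s a)) /\ (forall k s a, is_dist (Rdist M k s a)).

Notation step M := (prod (prod (bA M) (bRw M)) (bS M)).

(* Next-state kernel at global time t: at the end of an episode
   (H divides t+1) the state is reset to s0, otherwise P^kappa. *)
Definition Kstep (M : bamdp) (k : bK M) (t : nat) (s : bS M) (a : bA M)
    (s' : bS M) : R :=
  if (hor M %| t.+1)%N then (s' == s0 M)%:R else Ptr M k s a s'.

Definition cur_state (M : bamdp) (c : seq (step M)) : bS M :=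
  last (s0 M) [seq x.2 | x <- c].

Fixpoint traj_prob (M : bamdp) (k : bK M) (pol : seq (step M) -> bA M -> R)
    (pre c : seq (step M)) : R :=
  match c with
  | [::] => 1
  | ((a, r), s') :: c' =>
      let s := cur_state M pre in
      pol pre a * Rdist M k s a r * Kstep M k (size pre) s a s' *
      traj_prob M k pol (rcons pre ((a, r), s')) c'
  end.

Definition lik (M : bamdp) (k : bK M) (c : seq (step M)) : R :=
  traj_prob M k (fun _ _ => 1) [::] c.

Definition belief (M : bamdp) (c : seq (step M)) : {ffun bK M -> R} :=
  [ffun k => prior M k * lik M k c / \sum_(k' : bK M) prior M k' * lik M k' c].

Definition Rplus (M : bamdp) (b : {ffun bK M -> R}) (s : bS M) (a : bA M)
    (r : bRw M) : R := \sum_(k : bK M) b k * Rdist M k s a r.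
Definition Pplus (M : bamdp) (t : nat) (b : {ffun bK M -> R}) (s : bS M)
    (a : bA M) (s' : bS M) : R := \sum_(k : bK M) b k * Kstep M k t s a s'.

Definition Pon (M : bamdp) (t : nat) (b : {ffun bK M -> R}) (s : bS M)
    (a : bA M) (r : bRw M) (s' : bS M) : R :=
  Rplus M b s a r * Pplus M t b s a s'.

(* Task-dependent behavior policies p(mu | kappa), finitely supported on
   the policies mu m (m : bM). *)
Record behavior (M : bamdp) := Behavior {
  bM : finType;
  mu : bM -> bS M -> bA M -> R;
  q : bK M -> bM -> R
}.

Arguments bM {M}.
Arguments mu {M}.
Arguments q {M}.

Definition wf_behavior (M : bamdp) (B : behavior M) : Prop :=
  (forall k, is_dist (q B k)) /\ (forall m s, is_dist (mu B m s)).

Definition beh_pol (M : bamdp) (B : behavior M) (m : bM B) :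
    seq (step M) -> bA M -> R := fun pre a => mu B m (cur_state M pre) a.

Definition occ (M : bamdp) (k : bK M) (pol : seq (step M) -> bA M -> R)
    (t : nat) (s : bS M) (b : {ffun bK M -> R}) : R :=
  \sum_(c : t.-tuple (step M) | (cur_state M c == s) && (belief M c == b))
     traj_prob M k pol [::] c.

Definition offline_occurs (M : bamdp) (B : behavior M) (t : nat) (s : bS M)
    (b : {ffun bK M -> R}) (a : bA M) : bool :=
  (t < hor M * neps M)%N &&
  (0 < \sum_(k : bK M) \sum_(m : bM B)
         prior M k * q B k m * occ M k (beh_pol M B m) t s b * mu B m s a).

Definition Poff_num (M : bamdp) (B : behavior M) (t : nat) (s : bS M)
    (b : {ffun bK M -> R}) (a : bA M) (r : bRw M) (s' : bS M) : R :=
  \sum_(k : bK M) \sum_(m : bM B)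
     prior M k * q B k m * (Rdist M k s a r * Kstep M k t s a s' *
                            occ M k (beh_pol M B m) t s b).

Definition Poff (M : bamdp) (B : behavior M) (t : nat) (s : bS M)
    (b : {ffun bK M -> R}) (a : bA M) (r : bRw M) (s' : bS M) : R :=
  Poff_num M B t s b a r s' /
  \sum_(r' : bRw M) \sum_(s'' : bS M) Poff_num M B t s b a r' s''.

(* Meta-policies pi^+(a | s_t^+), with hyper-state (t, s, b). *)
Definition metapol (M : bamdp) :=
  nat -> bS M -> {ffun bK M -> R} -> bA M -> R.

Definition is_meta_policy (M : bamdp) (B : behavior M) (pi : metapol M) : Prop :=
  (forall t s b a, 0 <= pi t s b a) /\
  (forall t s b, (exists a, offline_occurs M B t s b a) ->
     \sum_(a : bA M) pi t s b a = 1).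

Definition batch_constrained (M : bamdp) (B : behavior M) (pi : metapol M)
    : Prop :=
  forall t s b a, ~~ offline_occurs M B t s b a -> pi t s b a = 0.

Fixpoint bamdp_prob (M : bamdp) (pi : metapol M) (pre c : seq (step M)) : R :=
  match c with
  | [::] => 1
  | ((a, r), s') :: c' =>
      let t := size pre in
      let s := cur_state M pre in
      let b := belief M pre in
      pi t s b a * Rplus M b s a r * Pplus M t b s a s' *
      bamdp_prob M pi (rcons pre ((a, r), s')) c'
  end.

Definition reach (M : bamdp) (pi : metapol M) (t : nat) (s : bS M)
    (b : {ffun bK M -> R}) : R :=
  \sum_(c : t.-tuple (step M) | (cur_state M c == s) && (belief M c == b))
     bamdp_prob M pi [::] c.

End BAMDP.

Arguments wf_behavior {R M}.
Arguments bS {R}.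
Arguments behavior {R}.
Arguments wf_bamdp {R}.
Arguments metapol {R}.
Arguments bA {R}.
Arguments bRw {R}.
Arguments bK {R}.
Arguments hor {R}.
Arguments neps {R}.
Arguments beh_pol {R M}.
Arguments offline_occurs {R M}.
Arguments Poff_num {R M}.
Arguments Poff {R M}.
Arguments is_meta_policy {R M}.
Arguments batch_constrained {R M}.
Arguments reach {R M}.
Arguments Pon {R M}.
Arguments bM {R M}.
Arguments mu {R M}.
Arguments q {R M}.

(* Main.v *)
Require Import Defs.
From HB Require Import structures.
From mathcomp Require Import all_boot all_order all_algebra.
From mathcomp Require Import reals.
From mathcomp Require Import ring lra.
Import Order.TTheory GRing.Theory Num.Theory.
Local Open Scope ring_scope.

Section Ex.
Variable R : realType.

Definition Mex : bamdp R :=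
  @BAMDP R (option bool) bool bool bool (fun r : bool => (r : nat)%:R) 2%N 1%N None
    (fun _ => 2^-1) (fun _ _ a s' => (s' == Some a)%:R)
    (fun k s _ r => if s is Some _ then (r == k)%:R else (r == false)%:R).

Definition Bex : behavior Mex :=
  @Behavior R Mex bool (fun m (_ : option bool) (a : bool) => (a == m)%:R)
    (fun k m => (m == k)%:R).

Lemma sumO (F : option bool -> R) :
  \sum_(i : option bool) F i = F None + (F (Some true) + F (Some false)).
Proof.
rewrite (bigD1 None) //= (bigD1 (Some true)) //= (bigD1 (Some false)) //=.
by rewrite big_pred0 ?addr0 //; case=> [[]|].
Qed.

Lemma sumS (F : option bool -> R) :
  \sum_(i : bS Mex) F i = F None + (F (Some true) + F (Some false)).
Proof. exact: sumO. Qed.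

Lemma sum_tuple0 (T : finType) (P : pred (0.-tuple T)) (F : 0.-tuple T -> R) :
  P [tuple] -> \sum_(c | P c) F c = F [tuple].
Proof.
move=> HP; rewrite (big_pred1 [tuple]) // => x.
by rewrite (tuple0 x) HP; apply/esym/eqP.
Qed.

Lemma sumK (F : bool -> R) : \sum_(i : bK Mex) F i = F true + F false.
Proof. exact: big_bool. Qed.
Lemma sumM (F : bool -> R) : \sum_(i : bM Bex) F i = F true + F false.
Proof. exact: big_bool. Qed.
Lemma sumRw (F : bool -> R) : \sum_(i : bRw Mex) F i = F true + F false.
Proof. exact: big_bool. Qed.

Definition b0 := belief R Mex [::].

Lemma belief0 k : b0 k = 2^-1.
Proof.
rewrite /b0 /belief ffunE /lik /= sumK /=.
have -> : (2^-1 : R) * 1 + 2^-1 * 1 = 1 by lra.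
by rewrite invr1 !mulr1.
Qed.

Lemma belief1 x : belief R Mex [:: ((x, false), Some x)] = b0.
Proof.
apply/ffunP => k; rewrite belief0 /belief ffunE /lik /= sumK /Kstep /=.
case: x; case: k => /=; field.
all: by [].
Qed.

Lemma Kstep_ge0 k t s a s' : 0 <= Kstep R Mex k t s a s'.
Proof. by rewrite /Kstep; case: ifP => _ /=; exact: ler0n. Qed.

Lemma Rdist_ge0 k s a r : 0 <= Rdist R Mex k s a r.
Proof. by case: s => [?|] /=; exact: ler0n. Qed.

Lemma traj_ge0 k pol pre c : (forall pre a, 0 <= pol pre a) ->
  0 <= traj_prob R Mex k pol pre c.
Proof.
move=> hp; elim: c pre => [|[[a r] s'] c IH] pre /=; first exact: ler01.
apply: mulr_ge0 => //; apply: mulr_ge0; [apply: mulr_ge0|] => //.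
  exact: Rdist_ge0.
exact: Kstep_ge0.
Qed.

Lemma belief_ge0 c k : 0 <= belief R Mex c k.
Proof.
rewrite /belief ffunE; apply: divr_ge0.
  apply: mulr_ge0; [rewrite /= invr_ge0; exact: ler0n | exact: traj_ge0].
apply: sumr_ge0 => i _; apply: mulr_ge0; [rewrite /= invr_ge0; exact: ler0n | exact: traj_ge0].
Qed.

Lemma bamdp_ge0 (pi : metapol Mex) pre c : (forall t s b a, 0 <= pi t s b a) ->
  0 <= bamdp_prob R Mex pi pre c.
Proof.
move=> hp; elim: c pre => [|[[a r] s'] c IH] pre /=; first exact: ler01.
apply: mulr_ge0 => //; apply: mulr_ge0; [apply: mulr_ge0|] => //.
  by apply: sumr_ge0 => k _; apply: mulr_ge0; [exact: belief_ge0 | exact: Rdist_ge0].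
by apply: sumr_ge0 => k _; apply: mulr_ge0; [exact: belief_ge0 | exact: Kstep_ge0].
Qed.

Lemma occ0 k pol : occ R Mex k pol 0 None b0 = 1.
Proof. by rewrite /occ sum_tuple0 //= eqxx. Qed.

Lemma occ_bad x k : k != x -> occ R Mex k (beh_pol Bex k) 1 (Some x) b0 = 0.
Proof.
move=> hk; rewrite /occ big1 // => c /andP[Hs _].
case: c Hs => [[|[[a r] s'] [|]]] //= _ Hs.
move/eqP: Hs; rewrite /cur_state /= => ->; rewrite /beh_pol /Kstep /cur_state /=.
by case: x k a hk => [] [] [] //= _; rewrite !(mul0r, mulr0).
Qed.

Lemma occ_good x : 0 < occ R Mex x (beh_pol Bex x) 1 (Some x) b0.
Proof.
rewrite /occ (bigD1 [tuple ((x, false), Some x)]) /=; last first.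
  by rewrite eqxx belief1 eqxx.
set S := (X in _ + X).
have : 0 <= S by apply: sumr_ge0 => c _; apply: traj_ge0 => ? ?; exact: ler0n.
rewrite /beh_pol /Kstep /= !eqxx /=.
move=> ?; lra.
Qed.


Lemma reach_pos x (pi : metapol Mex) : (forall t s b a, 0 <= pi t s b a) ->
  0 < pi 0%N None b0 x -> 0 < reach pi 1 (Some x) b0.
Proof.
move=> hp hx.
rewrite /reach (bigD1 [tuple ((x, false), Some x)]) /=; last first.
  by rewrite eqxx belief1 eqxx.
set S := (X in _ + X).
have : 0 <= S by apply: sumr_ge0 => c _; exact: bamdp_ge0.
rewrite /Rplus /Pplus /Kstep /= !sumK !belief0 !eqxx /=.
move=> ?; nra.
Qed.

Lemma off0 : offline_occurs Bex 0 None b0 true.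
Proof.
rewrite /offline_occurs /= !sumK /= !occ0 /=; lra.
Qed.

Lemma off1 x : offline_occurs Bex 1 (Some x) b0 x.
Proof.
rewrite /offline_occurs /= !sumK /=.
have := occ_good x; case: x => /= h; lra.
Qed.

Lemma Poff_val x a : Poff Bex 1 (Some x) b0 a x None = 1.
Proof.
rewrite /Poff /Poff_num /= /Kstep /= !sumRw !sumS !sumK /=.
have := occ_good x.
case: x => h.
  rewrite (@occ_bad true false erefl) //=.
  set O := occ _ _ _ _ _ _ _ in h *.
  by field; rewrite gt_eqF.
rewrite (@occ_bad false true erefl) //=.
set O := occ _ _ _ _ _ _ _ in h *.
by field; rewrite gt_eqF.
Qed.

Lemma Pon_val x a : Pon 1 b0 (Some x) a x None = 2^-1.
Proof.
rewrite /Pon /Rplus /Pplus /Kstep /= !sumK !belief0 /=.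
by case: x => /=; field.
Qed.

End Ex.

Theorem theorem1 (R : realType) :
  exists (M : bamdp R) (B : behavior M),
    wf_bamdp M /\ wf_behavior B /\
    forall pi : metapol M,
      is_meta_policy B pi -> batch_constrained B pi ->
      exists (t : nat) (s : bS M) (b : {ffun bK M -> R}) (a : bA M),
        (t < hor M * neps M)%N /\ 0 < reach pi t s b /\ 0 < pi t s b a /\
        exists (r : bRw M) (s' : bS M), Poff B t s b a r s' != Pon t b s a r s'.
Proof.
exists (Mex R), (Bex R); split; [|split].
- rewrite /wf_bamdp /=; split=> //; split=> //; split.
    by case=> [] [] //= /eqP; rewrite ?oner_eq0 // eq_sym oner_eq0.
  split; first by case=> /=; rewrite ?lexx ?ler01.
  split; first by split=> [_|]; [lra | rewrite (sumK R) /=; lra].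
  split=> k s a; split.
  + by move=> ?; exact: ler0n.
  + by rewrite (sumS R) /=; case: a => /=; rewrite ?addr0 ?add0r.
  + by move=> r; case: s => [?|]; exact: ler0n.
  + by case: s => [?|]; rewrite (sumRw R); case: k => /=; rewrite ?add0r ?addr0.
- split=> k; [|move=> s]; (split; [by move=> ?; exact: ler0n|]);
  by rewrite (sumK R); case: k => /=; rewrite ?add0r ?addr0.
move=> pi [pi0 pis] _.
have [x hx] : exists x, 0 < pi 0%N None (b0 R) x.
  have := pis 0%N None (b0 R) (ex_intro _ true (off0 R)).
  rewrite (sumK R) => hs.
  have h1 := pi0 0%N None (b0 R) true.
  have h2 := pi0 0%N None (b0 R) false.
  case: (ltrP 0 (pi 0%N None (b0 R) true)) => h; first by exists true.
  exists false; lra.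
have [a ha] : exists a, 0 < pi 1%N (Some x) (b0 R) a.
  have := pis 1%N (Some x) (b0 R) (ex_intro _ x (off1 R x)).
  rewrite (sumK R) => hs.
  have h1 := pi0 1%N (Some x) (b0 R) true.
  have h2 := pi0 1%N (Some x) (b0 R) false.
  case: (ltrP 0 (pi 1%N (Some x) (b0 R) true)) => h; first by exists true.
  exists false; lra.
exists 1%N, (Some x), (b0 R), a; split=> //; split.
  exact: reach_pos.
split=> //; exists x, None.
rewrite Poff_val Pon_val; apply/eqP; lra.
Qed.
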